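(* Let $u,v$ be uniform twins, or opposite twins, of an oriented graph $G^\sigma$. Then $sr(G^\sigma)=sr(G^\sigma-u)=sr(G^\sigma-v)$.
   Context: An oriented graph $G^\sigma$ is a simple graph $G$ together with an orientation of each edge. Its skew-adjacency matrix $S(G^\sigma)=(s_{ij})$ has $s_{ij}=1$ if there is an arc from $v_i$ to $v_j$, $s_{ij}=-1$ if there is an arc from $v_j$ to $v_i$, and $0$ otherwise; the skew-rank $sr(G^\sigma)$ is the rank of $S(G^\sigma)$. $G^\sigma-u$ is obtained by deleting $u$ and its incident edges. For a common neighbor $w$ of two nonadjacent vertices $u,v$: the edges among $u,v,w$ have uniform orientations if the arcs go from both $u$ and $v$ to $w$, or from $w$ to both $u$ and $v$; they have opposite orientations if one arc goes from $u$ (resp. $v$) to $w$ and the other from $w$ to $v$ (resp. $u$). Two nonadjacent vertices $u,v$ are uniform (resp. opposite) twins if $N(u)=N(v)$ and for every common neighbor $w$ the edges among $u,v,w$ have uniform (resp. opposite) orientations. *)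

(* Defs.v *)
From mathcomp Require Import all_boot all_order all_algebra.
Set Implicit Arguments. Unset Strict Implicit. Unset Printing Implicit Defensive.
Import GRing.Theory Num.Theory.
Local Open Scope ring_scope.

Definition oriented_graph (n : nat) (arc : rel 'I_n) : Prop :=
  (forall x, ~~ arc x x) /\ (forall x y, arc x y -> ~~ arc y x).

Definition adj (n : nat) (arc : rel 'I_n) : rel 'I_n :=
  fun x y => arc x y || arc y x.

Definition skew_mx (T : finType) (arc : rel T) : 'M[rat]_#|T| :=
  \matrix_(i, j) (if arc (enum_val i) (enum_val j) then 1
                  else if arc (enum_val j) (enum_val i) then -1 else 0).

Definition skew_rank (n : nat) (arc : rel 'I_n) : nat :=
  \rank (skew_mx arc).

Definition del_vertex (n : nat) (arc : rel 'I_n) (u : 'I_n)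
  : rel (sig (fun w : 'I_n => w != u)) :=
  fun x y => arc (proj1_sig x) (proj1_sig y).

Definition skew_rank_del (n : nat) (arc : rel 'I_n) (u : 'I_n) : nat :=
  \rank (skew_mx (@del_vertex n arc u)).

Definition twins_base (n : nat) (arc : rel 'I_n) (u v : 'I_n) : Prop :=
  u != v /\ ~~ adj arc u v /\ (forall w, adj arc u w = adj arc v w).

Definition uniform_twins (n : nat) (arc : rel 'I_n) (u v : 'I_n) : Prop :=
  twins_base arc u v /\
  forall w, adj arc u w -> adj arc v w ->
    (arc u w && arc v w) || (arc w u && arc w v).

Definition opposite_twins (n : nat) (arc : rel 'I_n) (u v : 'I_n) : Prop :=
  twins_base arc u v /\
  forall w, adj arc u w -> adj arc v w ->
    (arc u w && arc w v) || (arc v w && arc w u).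
Arguments del_vertex {n} arc u.

(* Main.v *)
Require Import Defs.
From mathcomp Require Import all_boot all_order all_algebra.
Import GRing.Theory Num.Theory.

Section Gen.
Local Open Scope ring_scope.

Lemma rank_rowsub_drop (F : fieldType) m k r (A : 'M[F]_(m,k)) p (f : 'I_r -> 'I_m) j0 c :
  (forall i, i != p -> exists j, f j = i) -> row p A = c *: row (f j0) A ->
  \rank (rowsub f A) = \rank A.
Proof.
move=> Hf Hp; apply/eqmx_rank/andP; split; first exact: rowsub_sub.
apply/row_subP => i; case: (eqVneq i p) => [->|/Hf [j <-]].
  by rewrite Hp scalemx_sub // -row_rowsub row_sub.
by rewrite -row_rowsub row_sub.
Qed.

Lemma rank_mxsub_drop (F : fieldType) m r (A : 'M[F]_m) p (f : 'I_r -> 'I_m) j0 c :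
  (forall i, i != p -> exists j, f j = i) ->
  (forall x, A p x = c * A (f j0) x) -> (forall x, A x p = c * A x (f j0)) ->
  \rank (mxsub f f A) = \rank A.
Proof.
move=> Hf Hr Hc.
rewrite -mxrank_tr trmx_mxsub.
have -> : mxsub f f A^T = rowsub f (rowsub f A)^T.
  by apply/matrixP => i j; rewrite !mxE.
rewrite (@rank_rowsub_drop _ _ _ _ _ p f j0 c) //; last first.
  by apply/rowP => x; rewrite !mxE Hc.
rewrite mxrank_tr (@rank_rowsub_drop _ _ _ _ _ p f j0 c) //.
by apply/rowP => x; rewrite !mxE Hr.
Qed.
End Gen.
Local Open Scope ring_scope.

Definition ent (n : nat) (arc : rel 'I_n) (x y : 'I_n) : rat :=
  if arc x y then 1 else if arc y x then -1 else 0.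

Arguments ent {n}.

Lemma ek (T : finType) (x : T) : @enum_val T (fun _ => true) (enum_rank x) = x.
Proof. exact: enum_rankK. Qed.


Lemma core (n : nat) (arc : rel 'I_n) (p q : 'I_n) (c : rat) :
  p != q ->
  (forall w, ent arc p w = c * ent arc q w) ->
  (forall w, ent arc w p = c * ent arc w q) ->
  skew_rank arc = skew_rank_del arc p.
Proof.
move=> npq Hr Hc.
have Hq : q != p by rewrite eq_sym.
pose h (i : 'I_#|{: {w : 'I_n | w != p}}|) : 'I_#|'I_n| :=
  enum_rank (proj1_sig (enum_val i)).
rewrite /skew_rank_del.
have -> : skew_mx (del_vertex arc p) = mxsub h h (skew_mx arc).
  by apply/matrixP => i j; rewrite !mxE /h /del_vertex !ek.
rewrite /skew_rank (@rank_mxsub_drop _ _ _ (skew_mx arc) (enum_rank p) h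
   (enum_rank (exist (fun w : 'I_n => w != p) q Hq)) c) //.
- move=> i Hi.
  have Hi' : enum_val i != p.
    by apply: contra Hi => /eqP <-; rewrite enum_valK.
  exists (enum_rank (exist (fun w : 'I_n => w != p) (enum_val i) Hi')).
  by rewrite /h ek /= enum_valK.
- by move=> x; rewrite !mxE /h !ek /= ?ek; exact: Hr.
- by move=> x; rewrite !mxE /h !ek /= ?ek; exact: Hc.
Qed.

Theorem lemma2p7 (n : nat) (arc : rel 'I_n) (u v : 'I_n) :
  oriented_graph arc ->
  uniform_twins arc u v \/ opposite_twins arc u v ->
  skew_rank arc = skew_rank_del arc u /\ skew_rank arc = skew_rank_del arc v.
Proof.
move=> [Hirr Has] H.
have [c [Hc2 [Hr Hcol]]] : exists c : rat, c * c = 1 /\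
   (forall w, ent arc u w = c * ent arc v w) /\
   (forall w, ent arc w u = c * ent arc w v).
  case: H => [[[Huv [Hna Hn]] Hw]|[[Huv [Hna Hn]] Hw]].
  - exists 1; split; first by [].
    have E : forall w, ent arc u w = ent arc v w /\ ent arc w u = ent arc w v.
      move=> w; rewrite /ent.
      case Ha: (adj arc u w).
        have Hb : adj arc v w by rewrite -Hn.
        move: (Hw w Ha Hb).
        case/orP => /andP [A B].
          by rewrite A B (negbTE (Has _ _ A)) (negbTE (Has _ _ B)).
        by rewrite A B (negbTE (Has _ _ A)) (negbTE (Has _ _ B)).
      have Hb : adj arc v w = false by rewrite -Hn.
      move: Ha Hb; rewrite /adj => /norP [/negbTE -> /negbTE ->].
      by move=> /norP [/negbTE -> /negbTE ->].
    by split=> w; rewrite mul1r; case: (E w).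
  - exists (-1); split; first by rewrite mulrNN mulr1.
    have E : forall w, ent arc u w = - ent arc v w /\ ent arc w u = - ent arc w v.
      move=> w; rewrite /ent.
      case Ha: (adj arc u w).
        have Hb : adj arc v w by rewrite -Hn.
        move: (Hw w Ha Hb).
        case/orP => /andP [A B].
          by rewrite A B (negbTE (Has _ _ A)) (negbTE (Has _ _ B)) opprK.
        by rewrite A B (negbTE (Has _ _ A)) (negbTE (Has _ _ B)).
      have Hb : adj arc v w = false by rewrite -Hn.
      move: Ha Hb; rewrite /adj => /norP [/negbTE -> /negbTE ->].
      by move=> /norP [/negbTE -> /negbTE ->]; rewrite oppr0.
    by split=> w; rewrite mulN1r; case: (E w).
have Huv : u != v by case: H => [[[]]|[[]]].
split.
  exact: (@core _ _ u v c Huv Hr Hcol).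
apply: (@core _ _ v u c); first by rewrite eq_sym.
  by move=> w; rewrite Hr mulrA Hc2 mul1r.
by move=> w; rewrite Hcol mulrA Hc2 mul1r.
Qed.
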